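(* For every $f\in\mathcal G$, the series $\sum_{n=1}^\infty f(nx)$ converges absolutely for almost every $x>0$, so $Pf(x)=\sum_{n=1}^\infty f(nx)-\frac1x\int_0^\infty f(t)\,dt$ is well defined a.e. on $(0,\infty)$, and $Pf$ is locally integrable on $(0,\infty)$.
   Context: A good kernel is a continuously differentiable function $f:[0,\infty)\to\mathbb C$ with $f(x)\to0$ as $x\to\infty$, $f\in L_1(0,\infty)$, and $\int_0^\infty t|f'(t)|\,dt<\infty$; $\mathcal G$ denotes the class of good kernels. *)

(* Defs.v *)
(* A complex-valued function f : [0,oo) -> C is
   represented by its real and imaginary parts u, v : R -> R (f = u + i v);
   values at negative arguments are irrelevant and never used. *)
From HB Require Import structures.
From mathcomp Require Import all_boot all_order all_algebra.
From mathcomp Require Import all_classical all_reals all_analysis.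
Set Implicit Arguments. Unset Strict Implicit. Unset Printing Implicit Defensive.
Import Order.TTheory GRing.Theory Num.Theory.
Import numFieldNormedType.Exports.
Local Open Scope classical_set_scope.
Local Open Scope ring_scope.

Definition Rpos {R : realType} : set R := `]0%R, +oo[%classic.

Definition cnorm {R : realType} (u v : R -> R) (t : R) : R :=
  Num.sqrt (u t ^+ 2 + v t ^+ 2).

Definition C1_on_nonneg {R : realType} (u u' : R -> R) : Prop :=
  [/\ forall x : R, 0 < x -> is_derive x 1 u (u' x),
      (fun h : R => h^-1 * (u h - u 0)) @ 0^'+ --> u' 0 &
      {within `[0, +oo[, continuous u'}].

Definition good_kernel {R : realType} (u v : R -> R) : Prop :=
  exists u' v' : R -> R,
    [/\ C1_on_nonneg u u', C1_on_nonneg v v',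
        u x @[x --> +oo] --> 0 /\ v x @[x --> +oo] --> 0,
        (@lebesgue_measure R).-integrable Rpos (EFin \o u) /\
        (@lebesgue_measure R).-integrable Rpos (EFin \o v) &
        (\int[@lebesgue_measure R]_(t in Rpos) (t * cnorm u' v' t)%:E
           < +oo)%E].

(* sum_{n>=1} w(n x) if the series converges, 0 otherwise
   (the value on the divergence set is immaterial: it is null) *)
Definition nsum {R : realType} (w : R -> R) (x : R) : R :=
  let S := series (fun k : nat => w (k.+1%:R * x)) in
  if `[< cvg (S @ \oo) >] then lim (S @ \oo) else 0.

(* real and imaginary parts of
   Pf(x) = sum_{n>=1} f(nx) - (1/x) int_0^oo f(t) dt *)
Definition Pf {R : realType} (w : R -> R) (x : R) : R :=
  nsum w x - x^-1 * (\int[@lebesgue_measure R]_(t in Rpos) w t)%R.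

(* Main.v *)
Require Import Defs.
From HB Require Import structures.
From mathcomp Require Import all_boot all_order all_algebra.
From mathcomp Require Import all_classical all_reals all_analysis.
From mathcomp Require Import measurable_realfun.
Import Order.TTheory GRing.Theory Num.Theory.
Import numFieldNormedType.Exports.
Local Open Scope classical_set_scope.
Local Open Scope ring_scope.
Lemma EFin_ge0' (R : realType) (r : R) : 0 <= r -> (0 <= r%:E)%E.
Proof. by move=> h; rewrite lee_fin. Qed.

Lemma RposE (R : realType) (x : R) : Rpos x = (0 < x).
Proof. by rewrite /Rpos /= in_itv /= andbT. Qed.

Lemma inv_bound (R : realType) (K : set R) : compact K -> K `<=` Rpos ->
  exists M, forall x, K x -> x^-1 <= M.
Proof.
move=> cK KR.
have : compact [set x^-1 | x in K].
  apply: continuous_compact => //; apply: continuous_in_subspaceT => x.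
  by rewrite inE => /KR; rewrite RposE => x0; apply: inv_continuous; rewrite gt_eqF.
move=> /compact_bounded[N [_ N1x]].
exists (`|N| + 1) => x Kx; apply: le_trans (ler_norm _) _.
apply: (N1x (`|N| + 1)); last by exists x.
by rewrite ltr_pwDr // ler_norm.
Qed.

Section core.
Variable R : realType.
Notation mu := (@lebesgue_measure R).
Variables (u u' : R -> R).
Hypothesis du : forall x : R, 0 < x -> is_derive x 1 u (u' x).
Hypothesis cu' : {within `[0, +oo[, continuous u'}.

Lemma cont_u x : 0 < x -> {for x, continuous u}.
Proof.
move=> x0; apply: differentiable_continuous; apply/derivable1_diffP.
by have := @du x x0 => -[].
Qed.

Lemma cont_u' : {in `]0, +oo[, continuous u'}.
Proof. by have /continuous_within_itvcyP[] := cu'. Qed.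

Lemma meas_u' (D : set R) : measurable D -> D `<=` `]0, +oo[ -> measurable_fun D u'.
Proof.
move=> mD DP; apply: (measurable_funS _ DP) => //.
apply: open_continuous_measurable_fun; first exact: rray_open.
by move=> x; rewrite inE /= => xp; apply: cont_u'.
Qed.

Lemma meas_u (D : set R) : measurable D -> D `<=` `]0, +oo[ -> measurable_fun D u.
Proof.
move=> mD DP; apply: (measurable_funS _ DP) => //.
apply: open_continuous_measurable_fun; first exact: rray_open.
move=> x; rewrite inE /= in_itv /= andbT; exact: cont_u.
Qed.

Lemma ftc_bound a b : 0 < a -> a < b ->
  (`|u b - u a|%:E <= \int[mu]_(s in `[a, b]) `|u' s|%:E)%E.
Proof.
move=> a0 ab.
have sub : `[a, b] `<=` `]0, +oo[.
  by move=> s /=; rewrite !in_itv /= andbT => /andP[+ _]; exact: lt_le_trans.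
rewrite -abse_EFin EFinB -(@continuous_FTC2 R u' u a b ab).
- apply: (le_trans (le_abse_integral _ _ _)) => //.
    by apply/measurable_EFinP; apply: meas_u'.
- apply: continuous_subspaceW cu'.
  by move=> s /=; rewrite !in_itv /= andbT => /andP[+ _]; apply: le_trans; exact: ltW.
- split.
  + move=> x; rewrite in_itv /= => /andP[ax _].
    by have := du _ (lt_trans a0 ax) => -[].
  + by apply: cvg_at_right_filter; exact: cont_u.
  + apply: cvg_at_left_filter; apply: cont_u; exact: lt_trans ab.
- move=> x; rewrite in_itv /= => /andP[ax _].
  by rewrite derive1E; have := du _ (lt_trans a0 ax) => -[].
Qed.

Lemma meas_absu (D : set R) : measurable D -> D `<=` `]0, +oo[ ->
  measurable_fun D (fun s => `|u s|).
Proof. by move=> mD DP; apply: (measurableT_comp (@normr_measurable R setT)); exact: meas_u. Qed.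

Lemma meas_absu' (D : set R) : measurable D -> D `<=` `]0, +oo[ ->
  measurable_fun D (fun s => `|u' s|).
Proof. by move=> mD DP; apply: (measurableT_comp (@normr_measurable R setT)); exact: meas_u'. Qed.

Lemma meas_su' (D : set R) : measurable D -> D `<=` `]0, +oo[ ->
  measurable_fun D (fun s => s * `|u' s|).
Proof. by move=> mD DP; apply: measurable_funM; [exact: measurable_id | exact: meas_absu']. Qed.

Lemma term_bound x a : 0 < x -> x <= a ->
  ((x * `|u a|)%:E <= \int[mu]_(s in `[a, (a + x)%R[) (`|u s| + s * `|u' s|)%:E)%E.
Proof.
move=> x0 xa; have a0 : 0 < a := lt_le_trans x0 xa.
have subo : `[a, (a + x)%R[ `<=` `]0, +oo[.
  by move=> s /=; rewrite !in_itv /= andbT => /andP[+ _]; exact: lt_le_trans.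
have subc : `[a, (a + x)%R] `<=` `]0, +oo[.
  by move=> s /=; rewrite !in_itv /= andbT => /andP[+ _]; exact: lt_le_trans.
set J := (\int[mu]_(s in `[a, (a + x)%R]) `|u' s|%:E)%E.
have J0 : (0 <= J)%E by apply: integral_ge0 => s _; rewrite lee_fin.
have pt t : t \in `[a, (a + x)%R[ -> (`|u a|%:E <= `|u t|%:E + J)%E.
  rewrite in_itv /= => /andP[aLt tb].
  have [<-|aNt] := eqVneq a t; first exact: leeDl.
  have aT : a < t by rewrite lt_neqAle aNt aLt.
  apply: (@le_trans _ _ (`|u t|%:E + `|u t - u a|%:E)%E).
    rewrite -EFinD lee_fin.
    by have := ler_normB (u t) (u t - u a); rewrite opprB addrCA subrr addr0.
  rewrite leeD2l //; apply: le_trans (@ftc_bound a t a0 aT) _.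
  apply: ge0_subset_integral => //.
  - by apply/measurable_EFinP; apply: meas_absu'.
  - by move=> s /=; rewrite !in_itv /= => /andP[-> /le_trans]; apply; exact: ltW.
have mI : measurable (`[a, (a + x)%R[ : set R) by exact: measurable_itv.
have muI : mu `[a, (a + x)%R[ = x%:E.
  by rewrite lebesgue_measure_itv /= lte_fin ltrDl x0 -EFinD addrAC subrr add0r.
have mU : measurable_fun `[a, (a + x)%R[ (fun s => `|u s|%:E).
  by apply/measurable_EFinP; apply: meas_absu.
have mV : measurable_fun `[a, (a + x)%R[ (fun s => (s * `|u' s|)%:E).
  by apply/measurable_EFinP; apply: meas_su'.
rewrite (@eq_integral _ _ _ mu _ (fun s => (Num.norm (u s))%:E + (s * Num.norm (u' s))%:E)%E); last first.
  by move=> s _; rewrite EFinD.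
rewrite ge0_integralD //; last first.
  by move=> s; rewrite /= in_itv /= => /andP[+ _] => /(lt_le_trans a0) s0; rewrite lee_fin mulr_ge0 // ltW.
have -> : (x * `|u a|)%:E = (\int[mu]_(s in `[a, (a + x)%R[) (cst ((Num.norm (u a))%:E)) s)%E.
  rewrite integral_cst //; set m := (X in (_ * X)%E); have -> : m = x%:E by exact: muI.
  by rewrite -EFinM mulrC.
apply: (@le_trans _ _ (\int[mu]_(s in `[a, (a + x)%R[) ((Num.norm (u s))%:E + J))%E).
  apply: ge0_le_integral => //.
  - by move=> s _; exact: EFin_ge0'.
  - by apply: emeasurable_funD => //; exact: measurable_cst.
rewrite ge0_integralD //.
apply: leeD => //.
rewrite integral_cst //; set m := (X in (_ * X)%E); have -> : m = x%:E by exact: muI.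
have mIc : measurable (`[a, (a + x)%R] : set R) by exact: measurable_itv.
have mU' : measurable_fun `[a, (a + x)%R] (fun s => (Num.norm (u' s))%:E).
  by apply/measurable_EFinP; apply: meas_absu'.
rewrite muleC /J -ge0_integralZl //; try (by move=> s _; exact: EFin_ge0'); try (by exact: EFin_ge0' (ltW x0)).
rewrite (@integral_itv_bndo_bndc _ (BLeft a) (a + x) (fun s => (s * Num.norm (u' s))%:E)); last first.
  by apply/measurable_EFinP; apply: meas_su'.
apply: ge0_le_integral => //.
- by move=> s _; apply: mule_ge0; apply: EFin_ge0'; [exact: ltW|].
- by apply: emeasurable_funM => //; exact: measurable_cst.
- by apply/measurable_EFinP; apply: meas_su'.
- move=> s; rewrite /= in_itv /= => /andP[aS _].
  by rewrite -EFinM lee_fin ler_wpM2r // (le_trans xa aS).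
Qed.

Lemma meas_g (D : set R) : measurable D -> D `<=` `]0, +oo[ ->
  measurable_fun D (fun s => (`|u s| + s * `|u' s|)%:E).
Proof.
by move=> mD DP; apply/measurable_EFinP; apply: measurable_funD; [exact: meas_absu|exact: meas_su'].
Qed.

Lemma partial_bound x N : 0 < x ->
  ((x * \sum_(k < N) `|u (k.+1%:R * x)|)%:E <=
   \int[mu]_(s in `[x, (N.+1%:R * x)%R[) (`|u s| + s * `|u' s|)%:E)%E.
Proof.
move=> x0; elim: N => [|N IH].
  rewrite big_ord0 mulr0; apply: integral_ge0 => s.
  rewrite /= in_itv /= => /andP[+ _] => /(lt_le_trans x0) s0.
  by apply: EFin_ge0'; rewrite addr_ge0 // mulr_ge0 // ltW.
have b0 : x <= N.+1%:R * x.
  by have x0' := ltW x0; rewrite -{1}(mul1r x) ler_wpM2r // ler1n.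
rewrite (itv_bndbnd_setU (x:=BLeft (N.+1%:R * x))); last 2 first.
- by rewrite bnd_simp.
- by rewrite bnd_simp ler_pM2r // ler_nat.
have -> : N.+2%:R * x = N.+1%:R * x + x by rewrite -[in LHS]addn1 natrD mulrDl mul1r.
have subU : `[x, (N.+1%:R * x)%R[ `|` `[(N.+1%:R * x)%R, (N.+1%:R * x + x)%R[ `<=` `]0, +oo[.
  move=> s [] /=; rewrite !in_itv /= andbT => /andP[+ _]; apply: lt_le_trans => //.
  exact: lt_le_trans b0.
rewrite ge0_integral_setU //.
- rewrite big_ord_recr /= mulrDr EFinD; apply: leeD => //.
  exact: term_bound.
- apply: meas_g => //; apply: measurableU; exact: measurable_itv.
- move=> s /subU; rewrite /= in_itv /= andbT => s0.
  by apply: EFin_ge0'; rewrite addr_ge0 // mulr_ge0 // ltW.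
- apply/disj_setPS => s [] /=; rewrite !in_itv /= => /andP[_ h1] /andP[h2 _].
  by move: (lt_le_trans h1 h2); rewrite ltxx.
Qed.

Definition Cint := (\int[mu]_(s in Rpos) (`|u s| + s * `|u' s|)%:E)%E.

Lemma Cint_ge0 : (0 <= Cint)%E.
Proof.
apply: integral_ge0 => s; rewrite /Rpos /= in_itv /= andbT => s0.
by apply: EFin_ge0'; rewrite addr_ge0 // mulr_ge0 // ltW.
Qed.

Hypothesis Cfin : (Cint < +oo)%E.

Lemma Cint_fin : Cint = (fine Cint)%:E.
Proof. by rewrite fineK // ge0_fin_numE // Cint_ge0. Qed.

Lemma psum_le x N : 0 < x ->
  \sum_(0 <= k < N) `|u (k.+1%:R * x)| <= fine Cint / x.
Proof.
move=> x0; rewrite ler_pdivlMr // mulrC -lee_fin -Cint_fin big_mkord.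
apply: le_trans (@partial_bound x N x0) _.
apply: ge0_subset_integral => //; try exact: measurable_itv.
- by apply: meas_g => //; exact: measurable_itv.
- move=> s; rewrite /Rpos /= in_itv /= andbT => s0.
  by apply: EFin_ge0'; rewrite addr_ge0 // mulr_ge0 // ltW.
- by move=> s; rewrite /Rpos /=; rewrite !in_itv /= andbT => /andP[+ _]; exact: lt_le_trans.
Qed.

Lemma abs_cvg x : 0 < x -> cvg (series (fun k => `|u (k.+1%:R * x)|) @ \oo).
Proof.
move=> x0; apply: nondecreasing_is_cvgn.
  by apply: nondecreasing_series => k _ _; exact: normr_ge0.
by exists (fine Cint / x) => _ [n _ <-]; exact: psum_le.
Qed.

Lemma u_cvg x : 0 < x -> cvg (series (fun k => u (k.+1%:R * x)) @ \oo).
Proof. by move=> x0; apply: normed_cvg; exact: abs_cvg. Qed.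

Lemma nsum_cvg x : 0 < x -> series (fun k => u (k.+1%:R * x)) @ \oo --> nsum u x.
Proof. by move=> x0; rewrite /nsum asboolT; [exact: u_cvg | exact: u_cvg]. Qed.

Lemma nsum_bound x : 0 < x -> `|nsum u x| <= fine Cint / x.
Proof.
move=> x0; rewrite /nsum asboolT; last exact: u_cvg.
apply: le_trans (lim_series_norm _) _; first exact: abs_cvg.
apply: limr_le; first exact: abs_cvg.
by apply: nearW => n; exact: psum_le.
Qed.


Lemma meas_uc (c : R) : 0 < c -> measurable_fun Rpos (fun x => u (c * x)).
Proof.
move=> c0; apply: open_continuous_measurable_fun; first exact: rray_open.
move=> x; rewrite inE /= RposE => x0.
apply: (@continuous_comp _ _ _ ( *%R c) u); first exact: mulrl_continuous.
by apply: cont_u; rewrite mulr_gt0.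
Qed.

Lemma meas_nsum : measurable_fun Rpos (nsum u).
Proof.
apply: (@measurable_fun_cvg _ _ R Rpos (fun m (x : R) => series (fun k => u (k.+1%:R * x)) m) (nsum u)).
  move=> m; rewrite /series /=; apply: measurable_sum => k; apply: meas_uc.
  by rewrite ltr0n.
by move=> x; rewrite RposE => x0; exact: nsum_cvg.
Qed.

Lemma meas_inv : measurable_fun Rpos (fun x : R => x^-1).
Proof.
apply: open_continuous_measurable_fun; first exact: rray_open.
by move=> x; rewrite inE /= RposE => x0; apply: inv_continuous; rewrite gt_eqF.
Qed.

Lemma meas_Pf : measurable_fun Rpos (Pf u).
Proof.
rewrite /Pf; apply: measurable_funB; first exact: meas_nsum.
by apply: measurable_funM; [exact: meas_inv | exact: measurable_cst].
Qed.

Let I := (\int[mu]_(t in Rpos) u t)%R.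

Lemma Pf_bound x : 0 < x -> `|Pf u x| <= (fine Cint + `|I|) / x.
Proof.
move=> x0; rewrite /Pf; apply: le_trans (ler_normB _ _) _; rewrite mulrDl.
apply: lerD; first exact: nsum_bound.
by rewrite normrM normfV (ger0_norm (ltW x0)) mulrC.
Qed.

Lemma loc_int : locally_integrable Rpos (Pf u).
Proof.
split; [exact: meas_Pf | exact: rray_open | move=> K KR cK].
have [M HM] := @inv_bound R K cK KR.
have mK := compact_measurable cK.
have C0 : 0 <= fine Cint + `|I|.
  by rewrite addr_ge0 // fine_ge0 // Cint_ge0.
apply: (@le_lt_trans _ _ (\int[mu]_(x in K) (cst (((fine Cint + `|I|) * `|M|)%:E) x))%E).
  apply: ge0_le_integral => //.
  - apply/measurable_EFinP; apply: measurableT_comp; first exact: normr_measurable.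
    apply: (measurable_funS _ KR); last exact: meas_Pf.
    by rewrite /Rpos; exact: measurable_itv.
  - move=> x Kx /=; rewrite lee_fin.
    have x0 : 0 < x by rewrite -RposE; exact: KR.
    apply: le_trans (@Pf_bound x x0) _.
    by rewrite ler_wpM2l // (le_trans (HM _ Kx)) // ler_norm.
rewrite integral_cst //; apply: lte_mul_pinfty => //.
- by apply: EFin_ge0'; rewrite mulr_ge0.
- exact: compact_finite_measure.
Qed.
End core.


Lemma Cfin_gen (R : realType) (u u' w : R -> R)
  (du : forall x : R, 0 < x -> is_derive x 1 u (u' x))
  (cu' : {within `[0, +oo[, continuous u'})
  (mw : measurable_fun Rpos w) (hw : forall s, 0 < s -> `|u' s| <= w s)
  (iu : (@lebesgue_measure R).-integrable Rpos (EFin \o u))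
  (fin : (\int[@lebesgue_measure R]_(t in Rpos) (t * w t)%:E < +oo)%E) :
  (Cint R u u' < +oo)%E.
Proof.
have mR : measurable (Rpos : set R) by rewrite /Rpos; exact: measurable_itv.
have sR : (Rpos : set R) `<=` `]0, +oo[ by [].
rewrite /Cint.
rewrite (@eq_integral _ _ _ (@lebesgue_measure R) _ (fun s => (Num.norm (u s))%:E + (s * Num.norm (u' s))%:E)%E); last first.
  by move=> s _; rewrite EFinD.
rewrite ge0_integralD //; try (by apply/measurable_EFinP; first [exact: meas_su' | exact: meas_absu]);
  try (by move=> s; rewrite RposE => s0; apply: EFin_ge0'; rewrite mulr_ge0 // ltW).
apply: lte_add_pinfty.
  move/integrableP : iu => [_]; apply: le_lt_trans.
  by rewrite le_eqVlt; apply/orP; left; apply/eqP; apply: eq_integral => s _; rewrite -abse_EFin.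
apply: le_lt_trans fin.
apply: ge0_le_integral => //.
- by move=> s; rewrite RposE => s0; apply: EFin_ge0'; rewrite mulr_ge0 // ltW.
- by apply/measurable_EFinP; exact: meas_su'.
- by apply/measurable_EFinP; apply: measurable_funM => //; exact: measurable_id.
- by move=> s; rewrite RposE => s0; rewrite lee_fin; apply: ler_wpM2l; [exact: ltW | exact: hw].
Qed.

Lemma cnorm_ge_l (R : realType) (a b : R) : `|a| <= Num.sqrt (a ^+ 2 + b ^+ 2).
Proof. by rewrite -sqrtr_sqr; apply: ler_wsqrtr; rewrite lerDl sqr_ge0. Qed.

Lemma cnorm_ge_r (R : realType) (a b : R) : `|b| <= Num.sqrt (a ^+ 2 + b ^+ 2).
Proof. by rewrite -sqrtr_sqr; apply: ler_wsqrtr; rewrite lerDr sqr_ge0. Qed.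

Lemma cnorm_le (R : realType) (a b : R) : Num.sqrt (a ^+ 2 + b ^+ 2) <= `|a| + `|b|.
Proof.
rewrite -[X in _ <= X]ger0_norm ?addr_ge0 // -sqrtr_sqr; apply: ler_wsqrtr.
rewrite sqrrD !real_normK ?num_real // addrAC lerDl.
by rewrite mulrn_wge0 // mulr_ge0.
Qed.

Theorem mainTheorem6 (R : realType) (u v : R -> R) :
  good_kernel u v ->
  ({ae (@lebesgue_measure R), forall x : R, 0 < x ->
      cvg (series (fun k : nat => cnorm u v (k.+1%:R * x)) @ \oo)}
   /\ locally_integrable Rpos (Pf u)
   /\ locally_integrable Rpos (Pf v)).
Proof.
move=> [u' [v' [[du _ cu'] [dv _ cv'] _ [iu iv] fin]]].
have mR : measurable (Rpos : set R) by rewrite /Rpos; exact: measurable_itv.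
have mcn : measurable_fun Rpos (cnorm u' v').
  apply: measurableT_comp; first exact: (continuous_measurable_fun (@sqrt_continuous R)).
  by apply: measurable_funD; apply: measurable_funX; apply: meas_u'.
have Cu := @Cfin_gen R u u' (cnorm u' v') du cu' mcn (fun s _ => @cnorm_ge_l R (u' s) (v' s)) iu fin.
have Cv := @Cfin_gen R v v' (cnorm u' v') dv cv' mcn (fun s _ => @cnorm_ge_r R (u' s) (v' s)) iv fin.
split; last split; [|exact: (@loc_int R u u' du cu' Cu)|exact: (@loc_int R v v' dv cv' Cv)].
apply: aeW => x x0.
apply: nondecreasing_is_cvgn.
  by apply: nondecreasing_series => k _ _; exact: sqrtr_ge0.
exists (fine (Cint R u u') / x + fine (Cint R v v') / x) => _ [n _ <-].
rewrite /series /=.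
apply: le_trans; first by apply: ler_sum => k _; exact: cnorm_le.
rewrite big_split /=; apply: lerD; [exact: (@psum_le R u u' du cu' Cu x n x0) | exact: (@psum_le R v v' dv cv' Cv x n x0)].
Qed.
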